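(* Let $G$ be a discrete group acting by homeomorphisms $\alpha$ on a locally compact Hausdorff space $X$, and let $\sigma$ be the induced action on $A=C_0(X)$, $\sigma_g(f)=f\circ\alpha_g^{-1}$. The following are equivalent: (i) $\sigma$ is $G$-separating, i.e. for all $a,b\in A_+$, $c\in A$, $\varepsilon>0$ there exist $d_1,d_2\in A$ and $g_1,g_2\in G$ with $\|d_1^*ad_1-\sigma_{g_1}(a)\|<\varepsilon$, $\|d_2^*bd_2-\sigma_{g_2}(b)\|<\varepsilon$ and $\|d_1^*cd_2\|<\varepsilon$; (ii) for all open $U_1,U_2\subseteq X$ and compact $K_1,K_2\subseteq X$ with $K_1\subseteq U_1$, $K_2\subseteq U_2$, there exist $g_1,g_2\in G$ with $\alpha_{g_1}(K_1)\subseteq U_1$, $\alpha_{g_2}(K_2)\subseteq U_2$ and $\alpha_{g_1}(K_1)\cap\alpha_{g_2}(K_2)=\emptyset$. *)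

(* Defs.v *)
From Stdlib Require Import Reals List.
Open Scope R_scope.

Definition C := (R * R)%type.
Definition Cadd (z w : C) : C := (fst z + fst w, snd z + snd w).
Definition Csub (z w : C) : C := (fst z - fst w, snd z - snd w).
Definition Cmul (z w : C) : C :=
  (fst z * fst w - snd z * snd w, fst z * snd w + snd z * fst w).
Definition Cconj (z : C) : C := (fst z, - snd z).
Definition Cabs (z : C) : R := sqrt (fst z * fst z + snd z * snd z).

Record topology (X : Type) := Topology {
  is_open : (X -> Prop) -> Prop;
  open_full : is_open (fun _ => True);
  open_inter : forall U V, is_open U -> is_open V ->
                 is_open (fun x => U x /\ V x);
  open_union : forall (I : Type) (F : I -> X -> Prop),
                 (forall i, is_open (F i)) -> is_open (fun x => exists i, F i x)
}.
Arguments is_open {X} t _.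

Definition subset {X : Type} (A B : X -> Prop) : Prop := forall x, A x -> B x.

Definition compact {X : Type} (T : topology X) (K : X -> Prop) : Prop :=
  forall (I : Type) (F : I -> X -> Prop),
    (forall i, is_open T (F i)) ->
    subset K (fun x => exists i, F i x) ->
    exists l : list I, subset K (fun x => exists i, In i l /\ F i x).

Definition hausdorff {X : Type} (T : topology X) : Prop :=
  forall x y : X, x <> y ->
    exists U V, is_open T U /\ is_open T V /\ U x /\ V y /\
      forall z, ~ (U z /\ V z).

Definition locally_compact {X : Type} (T : topology X) : Prop :=
  forall x : X, exists U K, is_open T U /\ compact T K /\ U x /\ subset U K.

Definition continuous {X : Type} (T : topology X) (f : X -> X) : Prop :=
  forall U, is_open T U -> is_open T (fun x => U (f x)).

Definition homeomorphism {X : Type} (T : topology X) (f : X -> X) : Prop :=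
  continuous T f /\ exists h : X -> X,
    continuous T h /\ (forall x, h (f x) = x) /\ (forall x, f (h x) = x).

Definition continuous_C {X : Type} (T : topology X) (f : X -> C) : Prop :=
  forall x eps, 0 < eps -> exists U, is_open T U /\ U x /\
     forall y, U y -> Cabs (Csub (f y) (f x)) < eps.

Definition vanishes_at_infinity {X : Type} (T : topology X) (f : X -> C) : Prop :=
  forall eps, 0 < eps -> exists K, compact T K /\
     forall x, ~ K x -> Cabs (f x) < eps.

Definition in_C0 {X : Type} (T : topology X) (f : X -> C) : Prop :=
  continuous_C T f /\ vanishes_at_infinity T f.

Definition positive_C0 {X : Type} (T : topology X) (f : X -> C) : Prop :=
  in_C0 T f /\ forall x, snd (f x) = 0 /\ 0 <= fst (f x).

Definition norm_lt {X : Type} (f : X -> C) (eps : R) : Prop :=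
  exists delta, delta < eps /\ forall x, Cabs (f x) <= delta.

Record group (G : Type) := Group {
  gmul : G -> G -> G;
  gone : G;
  ginv : G -> G;
  gmulA : forall a b c, gmul a (gmul b c) = gmul (gmul a b) c;
  gmul1g : forall a, gmul gone a = a;
  gmulg1 : forall a, gmul a gone = a;
  gmulVg : forall a, gmul (ginv a) a = gone;
  gmulgV : forall a, gmul a (ginv a) = gone
}.
Arguments gmul {G} g _ _.
Arguments gone {G} g.
Arguments ginv {G} g _.

Definition action_by_homeos {X G : Type} (T : topology X) (Gr : group G)
    (alpha : G -> X -> X) : Prop :=
  (forall x, alpha (gone Gr) x = x) /\
  (forall g h x, alpha (gmul Gr g h) x = alpha g (alpha h x)) /\
  (forall g, homeomorphism T (alpha g)).

Definition sigma {X G : Type} (Gr : group G) (alpha : G -> X -> X)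
    (g : G) (f : X -> C) : X -> C :=
  fun x => f (alpha (ginv Gr g) x).

Definition G_separating {X G : Type} (T : topology X) (Gr : group G)
    (alpha : G -> X -> X) : Prop :=
  forall a b c : X -> C,
    positive_C0 T a -> positive_C0 T b -> in_C0 T c ->
    forall eps, 0 < eps ->
    exists d1 d2 : X -> C, in_C0 T d1 /\ in_C0 T d2 /\
    exists g1 g2 : G,
      norm_lt (fun x => Csub (Cmul (Cmul (Cconj (d1 x)) (a x)) (d1 x))
                             (sigma Gr alpha g1 a x)) eps /\
      norm_lt (fun x => Csub (Cmul (Cmul (Cconj (d2 x)) (b x)) (d2 x))
                             (sigma Gr alpha g2 b x)) eps /\
      norm_lt (fun x => Cmul (Cmul (Cconj (d1 x)) (c x)) (d2 x)) eps.

Definition compact_separating {X G : Type} (T : topology X) (Gr : group G)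
    (alpha : G -> X -> X) : Prop :=
  forall U1 U2 K1 K2 : X -> Prop,
    is_open T U1 -> is_open T U2 -> compact T K1 -> compact T K2 ->
    subset K1 U1 -> subset K2 U2 ->
    exists g1 g2 : G,
      (forall x, K1 x -> U1 (alpha g1 x)) /\
      (forall x, K2 x -> U2 (alpha g2 x)) /\
      (forall x1 x2, K1 x1 -> K2 x2 -> alpha g1 x1 <> alpha g2 x2).

(* Main.v *)
From Pilot Require Import Defs.
From Stdlib Require Import Reals List Lra Lia Psatz ZArith Classical ClassicalEpsilon FunctionalExtensionality PropExtensionality.
Import Pilot.Defs.
Open Scope R_scope.


Import Pilot.Defs.

Lemma open_ext {X} (T : topology X) (U V : X -> Prop) :
  (forall x, U x <-> V x) -> is_open T U -> is_open T V.
Proof.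
  intros H HU. replace V with U; auto.
  apply functional_extensionality; intro x; apply propositional_extensionality; auto.
Qed.

Lemma open_empty {X} (T : topology X) : is_open T (fun _ => False).
Proof.
  apply (open_ext T (fun x => exists i : Empty_set, (fun _ _ => True) i x)).
  - intros x; split; [intros [[] _]| intros []].
  - apply open_union. intros [].
Qed.

Lemma open_local {X} (T : topology X) (S : X -> Prop) :
  (forall x, S x -> exists W, is_open T W /\ W x /\ subset W S) -> is_open T S.
Proof.
  intros H.
  apply (open_ext T (fun x => exists i : {W : X -> Prop | is_open T W /\ subset W S}, proj1_sig i x)).
  - intros x; split.
    + intros [[W [HW HS]] Hx]; simpl in Hx; auto.
    + intros Hx; destruct (H x Hx) as [W [HW [HWx HS]]].
      exists (exist _ W (conj HW HS)); simpl; auto.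
  - apply open_union. intros [W [HW HW2]]; simpl; auto.
Qed.

Lemma open_or {X} (T : topology X) U V : is_open T U -> is_open T V -> is_open T (fun x => U x \/ V x).
Proof.
  intros HU HV; apply open_local; intros x [Hx|Hx].
  - exists U; repeat split; auto. intros y Hy; auto.
  - exists V; repeat split; auto. intros y Hy; auto.
Qed.

Lemma open_inter_list {X} (T : topology X) (A : Type) (l : list A) (F : A -> X -> Prop) :
  (forall a, In a l -> is_open T (F a)) -> is_open T (fun x => forall a, In a l -> F a x).
Proof.
  induction l as [|a l IH]; intros H.
  - apply (open_ext T (fun _ => True)); [|apply open_full].
    intros x; split; auto. intros _ a [].
  - apply (open_ext T (fun x => F a x /\ (forall b, In b l -> F b x))).
    + intros x; split.
      * intros [H1 H2] b [<-|Hb]; auto.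
      * intros H1; split; auto. apply H1; left; auto. intros b Hb; apply H1; right; auto.
    + apply open_inter. apply H; left; auto. apply IH; intros b Hb; apply H; right; auto.
Qed.

Lemma sep_point {X} (T : topology X) (HT : hausdorff T) (K : X -> Prop) x :
  compact T K -> ~ K x -> exists P W, is_open T P /\ is_open T W /\ subset K P /\ W x /\
     forall z, ~ (P z /\ W z).
Proof.
  intros HK Hx.
  set (I := {P : X -> Prop | is_open T P /\ exists W, is_open T W /\ W x /\ forall z, ~(P z /\ W z)}).
  destruct (HK I (fun i => proj1_sig i)) as [l Hl].
  - intros [P [HP HP2]]; simpl; auto.
  - intros y Hy. assert (Hyx : y <> x) by (intros ->; auto).
    destruct (HT y x Hyx) as [U [V [HU [HV [HUy [HVx HUV]]]]]].
    exists (exist _ U (conj HU (ex_intro _ V (conj HV (conj HVx HUV))))); simpl; auto.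
  - assert (HW : exists W, is_open T W /\ W x /\ forall i, In i l -> forall z, ~ (proj1_sig i z /\ W z)).
    { clear Hl. induction l as [|i l IH].
      - exists (fun _ => True); repeat split; auto; try apply open_full; try (intros i []).
      - destruct IH as [W [HW [HWx HWd]]].
        destruct i as [P [HP [W' [HW' [HW'x HW'd]]]]].
        exists (fun z => W z /\ W' z); split; [apply open_inter; auto|split; [split; auto|]].
        intros j [<-|Hj] z [Hz1 [Hz2 Hz3]]; simpl in *.
        + apply (HW'd z); auto.
        + apply (HWd j Hj z); auto. }
    destruct HW as [W [HW [HWx HWd]]].
    exists (fun z => exists i, In i l /\ proj1_sig i z), W; repeat split; auto.
    + apply open_local. intros z [i [Hi Hz]]. exists (proj1_sig i); repeat split; auto.
      destruct i as [P [HP HP2]]; auto. intros w Hw; exists i; auto.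
    + intros z [[i [Hi Hz]] Hz']. apply (HWd i Hi z); auto.
Qed.

Lemma compact_closed {X} (T : topology X) (HT : hausdorff T) (K : X -> Prop) :
  compact T K -> is_open T (fun x => ~ K x).
Proof.
  intros HK. apply open_local. intros x Hx.
  destruct (sep_point T HT K x HK Hx) as [P [W [HP [HW [HKP [HWx HPW]]]]]].
  exists W; repeat split; auto. intros z Hz HKz. apply (HPW z); auto.
Qed.

Lemma sep_compact {X} (T : topology X) (HT : hausdorff T) (K C : X -> Prop) :
  compact T K -> compact T C -> (forall z, ~ (K z /\ C z)) ->
  exists P Q, is_open T P /\ is_open T Q /\ subset K P /\ subset C Q /\ forall z, ~ (P z /\ Q z).
Proof.
  intros HK HC HKC.
  set (I := {Q : X -> Prop | is_open T Q /\ exists P, is_open T P /\ subset K P /\ forall z, ~(P z /\ Q z)}).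
  destruct (HC I (fun i => proj1_sig i)) as [l Hl].
  - intros [Q [HQ HQ2]]; simpl; auto.
  - intros y Hy. assert (Hyn : ~ K y) by (intros Hk; apply (HKC y); auto).
    destruct (sep_point T HT K y HK Hyn) as [P [W [HP [HW [HKP [HWy HPW]]]]]].
    exists (exist _ W (conj HW (ex_intro _ P (conj HP (conj HKP HPW))))); simpl; auto.
  - assert (HP : exists P, is_open T P /\ subset K P /\ forall i, In i l -> forall z, ~ (P z /\ proj1_sig i z)).
    { clear Hl. induction l as [|i l IH].
      - exists (fun _ => True); split; [apply open_full|split; [intros z _; auto| intros i []]].
      - destruct IH as [P [HP [HKP HPd]]].
        destruct i as [Q [HQ [P' [HP' [HKP' HP'd]]]]].
        exists (fun z => P z /\ P' z); split; [apply open_inter; auto|split; [intros z Hz; split; auto|]].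
        intros j [<-|Hj] z [[Hz1 Hz2] Hz3]; simpl in *.
        + apply (HP'd z); auto.
        + apply (HPd j Hj z); auto. }
    destruct HP as [P [HP [HKP HPd]]].
    exists P, (fun z => exists i, In i l /\ proj1_sig i z); repeat split; auto.
    + apply open_local. intros z [i [Hi Hz]]. exists (proj1_sig i); repeat split; auto.
      destruct i as [Q [HQ HQ2]]; auto. intros w Hw; exists i; auto.
    + intros z [Hz [i [Hi Hz']]]. apply (HPd i Hi z); auto.
Qed.

Lemma compact_inter_closed {X} (T : topology X) (L Q : X -> Prop) :
  compact T L -> is_open T Q -> compact T (fun x => L x /\ ~ Q x).
Proof.
  intros HL HQ I F HF Hcov.
  destruct (HL (option I) (fun o => match o with Some i => F i | None => Q end)) as [l Hl].
  - intros [i|]; auto.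
  - intros x Hx. destruct (classic (Q x)) as [Hq|Hq].
    + exists None; auto.
    + destruct (Hcov x (conj Hx Hq)) as [i Hi]. exists (Some i); auto.
  - exists (flat_map (fun o => match o with Some i => i :: nil | None => nil end) l).
    intros x [Hx Hq]. destruct (Hl x Hx) as [[i|] [Hin Hi]].
    + exists i; split; auto. apply in_flat_map. exists (Some i); simpl; auto.
    + contradiction.
Qed.

Lemma compact_or {X} (T : topology X) (A B : X -> Prop) :
  compact T A -> compact T B -> compact T (fun x => A x \/ B x).
Proof.
  intros HA HB I F HF Hcov.
  destruct (HA I F HF) as [l1 H1]. { intros x Hx; apply Hcov; auto. }
  destruct (HB I F HF) as [l2 H2]. { intros x Hx; apply Hcov; auto. }
  exists (l1 ++ l2). intros x [Hx|Hx].
  - destruct (H1 x Hx) as [i [Hi Hfi]]. exists i; split; auto. apply in_or_app; auto.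
  - destruct (H2 x Hx) as [i [Hi Hfi]]. exists i; split; auto. apply in_or_app; auto.
Qed.

Lemma compact_empty {X} (T : topology X) : compact T (fun _ => False).
Proof. intros I F _ _. exists nil. intros x []. Qed.

Lemma compact_preimage {X} (T : topology X) (f h : X -> X) (K : X -> Prop) :
  continuous T f -> (forall y, h (f y) = y) -> (forall x, f (h x) = x) ->
  compact T K -> compact T (fun x => K (h x)).
Proof.
  intros Hf Hhf Hfh HK I F HF Hcov.
  destruct (HK I (fun i y => F i (f y))) as [l Hl].
  - intros i; apply Hf; auto.
  - intros y Hy. apply Hcov. rewrite Hhf; auto.
  - exists l. intros x Hx. destruct (Hl (h x) Hx) as [i [Hi Hfi]]. exists i; rewrite Hfh in Hfi; auto.
Qed.

Lemma shrink {X} (T : topology X) (HT : hausdorff T) (HLC : locally_compact T) (K U : X -> Prop) :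
  compact T K -> is_open T U -> subset K U ->
  exists V L, is_open T V /\ compact T L /\ subset K V /\ subset V L /\ subset L U.
Proof.
  intros HK HU HKU.
  set (I := {V : X -> Prop | is_open T V /\ exists L, compact T L /\ subset V L}).
  destruct (HK I (fun i => proj1_sig i)) as [l Hl].
  - intros [V [HV HV2]]; auto.
  - intros y _. destruct (HLC y) as [V [L [HV [HL [HVy HVL]]]]].
    exists (exist _ V (conj HV (ex_intro _ L (conj HL HVL)))); simpl; auto.
  - assert (H0 : exists V0 L0, is_open T V0 /\ compact T L0 /\ subset V0 L0 /\
        forall x, (exists i, In i l /\ proj1_sig i x) -> V0 x).
    { clear Hl. induction l as [|i l IH].
      - exists (fun _ => False), (fun _ => False); repeat split; auto.
        apply open_empty. apply compact_empty. intros x []. intros x [i [[] _]].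
      - destruct IH as [V0 [L0 [HV0 [HL0 [HVL0 Hin]]]]].
        destruct i as [V [HV [L [HL HVL]]]].
        exists (fun x => V x \/ V0 x), (fun x => L x \/ L0 x); repeat split.
        + apply open_or; auto.
        + apply compact_or; auto.
        + intros x [Hx|Hx]; [left; apply HVL|right; apply HVL0]; auto.
        + intros x [j [[<-|Hj] Hx]]; simpl in *; [left; auto| right; apply Hin; eauto]. }
    destruct H0 as [V0 [L0 [HV0 [HL0 [HVL0 Hin]]]]].
    assert (HC : compact T (fun x => L0 x /\ ~ U x)) by (apply compact_inter_closed; auto).
    destruct (sep_compact T HT K _ HK HC) as [P [Q [HP [HQ [HKP [HCQ HPQ]]]]]].
    { intros z [Hz1 [_ Hz2]]. apply Hz2; auto. }
    exists (fun x => V0 x /\ P x), (fun x => L0 x /\ ~ Q x); split; [|split; [|split; [|split]]].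
    + apply open_inter; auto.
    + apply compact_inter_closed; auto.
    + intros x Hx; split; auto.
    + intros x [Hx1 Hx2]; split; auto. intros Hq; apply (HPQ x); auto.
    + intros x [Hx1 Hx2]. destruct (classic (U x)) as [Hu|Hu]; auto.
      exfalso; apply Hx2; apply HCQ; auto.
Qed.




Lemma Rmax_lip a b c : Rabs (Rmax a c - Rmax b c) <= Rabs (a - b).
Proof. unfold Rmax, Rabs; repeat destruct Rle_dec; repeat destruct Rcase_abs; lra. Qed.

Lemma cont_id x : continuity_pt (fun t => t) x.
Proof. apply derivable_continuous_pt, derivable_pt_id. Qed.
Lemma cont_sq4 x : continuity_pt (fun t => t * t / 4) x.
Proof. change (continuity_pt (mult_fct (mult_fct id id) (fct_cte (/4))) x).
  apply continuity_pt_mult. apply continuity_pt_mult; apply cont_id. apply continuity_pt_const. intros a b; auto. Qed.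
Lemma cont_opp x : continuity_pt Ropp x.
Proof. change (continuity_pt (opp_fct id) x). apply continuity_pt_opp, cont_id. Qed.
Lemma cont_invmax c x : 0 < c -> continuity_pt (fun t => / Rmax t c) x.
Proof. intros Hc.
  change (continuity_pt (inv_fct (fun t => Rmax t c)) x). apply continuity_pt_inv.
  - unfold continuity_pt, continue_in, limit1_in, limit_in; simpl. intros eps He; exists eps; split; auto.
    intros y [_ Hy]. unfold R_dist in *. eapply Rle_lt_trans; [apply Rmax_lip|auto].
  - unfold Rmax; destruct Rle_dec; lra.
Qed.

Definition rcont {X} (T : topology X) (f : X -> R) := forall x eps, 0 < eps ->
  exists W, is_open T W /\ W x /\ forall y, W y -> Rabs (f y - f x) < eps.

Lemma rcont_ext {X} (T : topology X) (f g : X -> R) : (forall x, f x = g x) -> rcont T f -> rcont T g.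
Proof. intros H Hf. replace g with f; auto. apply functional_extensionality; auto. Qed.

Lemma rcont_const {X} (T : topology X) c : rcont T (fun _ => c).
Proof. intros x eps He. exists (fun _ => True); repeat split; auto. apply open_full.
  intros; rewrite Rminus_diag, Rabs_R0; auto. Qed.

Lemma rcont_add {X} (T : topology X) f g : rcont T f -> rcont T g -> rcont T (fun x => f x + g x).
Proof.
  intros Hf Hg x eps He.
  destruct (Hf x (eps/2)) as [W1 [HW1 [Hx1 H1]]]; [lra|].
  destruct (Hg x (eps/2)) as [W2 [HW2 [Hx2 H2]]]; [lra|].
  exists (fun y => W1 y /\ W2 y); split; [apply open_inter; auto|split; auto].
  intros y [Hy1 Hy2]. specialize (H1 y Hy1); specialize (H2 y Hy2).
  replace (f y + g y - (f x + g x)) with ((f y - f x) + (g y - g x)) by ring.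
  eapply Rle_lt_trans; [apply Rabs_triang|lra].
Qed.

Lemma rcont_comp {X} (T : topology X) f (phi : R -> R) :
  rcont T f -> (forall x, continuity_pt phi (f x)) -> rcont T (fun x => phi (f x)).
Proof.
  intros Hf Hphi x eps He.
  specialize (Hphi x). unfold continuity_pt, continue_in, limit1_in, limit_in in Hphi; simpl in Hphi.
  destruct (Hphi eps He) as [alp [Halp Ha]].
  destruct (Hf x alp Halp) as [W [HW [Hx H]]].
  exists W; repeat split; auto. intros y Hy.
  destruct (Req_dec (f y) (f x)) as [E|E].
  - rewrite E, Rminus_diag, Rabs_R0; auto.
  - apply (Ha (f y)). split; [split; [constructor|auto]|]. unfold R_dist; auto.
Qed.

Lemma rcont_mul {X} (T : topology X) f g : rcont T f -> rcont T g -> rcont T (fun x => f x * g x).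
Proof.
  intros Hf Hg.
  assert (Hs : forall h, rcont T h -> rcont T (fun x => h x * h x / 4)).
  { intros h Hh. apply (rcont_comp T h (fun t => t * t / 4)); auto. intros x.
apply cont_sq4. }
  assert (Hopp : rcont T (fun x => - g x)).
  { apply (rcont_comp T g Ropp); auto. intros; apply cont_opp. }
  assert (Hp := Hs _ (rcont_add T _ _ Hf Hg)).
  assert (Hm := Hs _ (rcont_add T _ _ Hf Hopp)).
  assert (Hmm : rcont T (fun x => - ((f x + - g x) * (f x + - g x) / 4))).
  { apply (rcont_comp T _ Ropp); auto. intros; apply cont_opp. }
  eapply rcont_ext; [|exact (rcont_add T _ _ Hp Hmm)]. intros x; simpl; field.
Qed.



Lemma rcont_max {X} (T : topology X) f c : rcont T f -> rcont T (fun x => Rmax (f x) c).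
Proof.
  intros Hf x eps He. destruct (Hf x eps He) as [W [HW [Hx H]]].
  exists W; repeat split; auto. intros y Hy. eapply Rle_lt_trans; [apply Rmax_lip|auto].
Qed.

Lemma rcont_opens {X} (T : topology X) f :
  (forall c, is_open T (fun x => c < f x)) -> (forall c, is_open T (fun x => f x < c)) -> rcont T f.
Proof.
  intros H1 H2 x eps He. exists (fun y => f x - eps < f y /\ f y < f x + eps).
  split; [apply open_inter; auto|split; [lra|]].
  intros y [Hy1 Hy2]. unfold Rabs; destruct Rcase_abs; lra.
Qed.



Definition PP (X : Type) := ((X -> Prop) * (X -> Prop))%type.
Definition good {X} (T : topology X) (p : PP X) :=
  is_open T (fst p) /\ compact T (snd p) /\ subset (fst p) (snd p).
Definition plt {X} (p q : PP X) := subset (snd p) (fst q).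

Definition interp {X} (T : topology X) (p q : PP X) : PP X :=
  epsilon (inhabits ((fun _ => False), (fun _ => False))) (fun r => good T r /\ plt p r /\ plt r q).

Lemma interp_spec {X} (T : topology X) (HT : hausdorff T) (HLC : locally_compact T) p q :
  good T p -> good T q -> plt p q -> good T (interp T p q) /\ plt p (interp T p q) /\ plt (interp T p q) q.
Proof.
  intros [Hp1 [Hp2 Hp3]] [Hq1 [Hq2 Hq3]] Hpq. unfold interp. apply epsilon_spec.
  destruct (shrink T HT HLC (snd p) (fst q) Hp2 Hq1 Hpq) as [V [L [HV [HL [H1 [H2 H3]]]]]].
  exists (V, L). unfold good, plt; simpl; auto.
Qed.

Fixpoint fam {X} (T : topology X) (p0 p1 : PP X) (n k : nat) : PP X :=
  match n with
  | O => match k with O => p0 | _ => p1 end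
  | S n => if Nat.even k then fam T p0 p1 n (Nat.div2 k)
           else interp T (fam T p0 p1 n (Nat.div2 k)) (fam T p0 p1 n (S (Nat.div2 k)))
  end.

Lemma fam_even {X} (T : topology X) p0 p1 n m : fam T p0 p1 (S n) (2 * m) = fam T p0 p1 n m.
Proof. cbn [fam]. rewrite Nat.even_even, Nat.div2_even. reflexivity. Qed.

Lemma fam_odd {X} (T : topology X) p0 p1 n m : fam T p0 p1 (S n) (2 * m + 1) =
  interp T (fam T p0 p1 n m) (fam T p0 p1 n (S m)).
Proof. cbn [fam]. rewrite Nat.even_odd, Nat.div2_odd'. reflexivity. Qed.

Lemma fam_inv {X} (T : topology X) (HT : hausdorff T) (HLC : locally_compact T) p0 p1 :
  good T p0 -> good T p1 -> plt p0 p1 -> forall n,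
  (forall k, (k <= 2 ^ n)%nat -> good T (fam T p0 p1 n k)) /\
  (forall k, (k < 2 ^ n)%nat -> plt (fam T p0 p1 n k) (fam T p0 p1 n (S k))).
Proof.
  intros H0 H1 H01. induction n as [|n [IHg IHp]].
  - simpl. split.
    + intros [|[|k]] Hk; auto; lia.
    + intros [|k] Hk; auto; lia.
  - split.
    + intros k Hk. destruct (Nat.Even_or_Odd k) as [[m ->]|[m ->]].
      * rewrite fam_even. apply IHg. simpl in Hk; lia.
      * rewrite fam_odd. assert (Hm : (m < 2 ^ n)%nat) by (simpl in Hk; lia).
        apply interp_spec; auto; try (apply IHg; lia); try (apply IHp; lia).
    + intros k Hk. destruct (Nat.Even_or_Odd k) as [[m ->]|[m ->]].
      * replace (S (2 * m)) with (2 * m + 1)%nat by lia.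
        rewrite fam_even, fam_odd. assert (Hm : (m < 2 ^ n)%nat) by (simpl in Hk; lia).
        apply interp_spec; auto; try (apply IHg; lia); try (apply IHp; lia).
      * replace (S (2 * m + 1)) with (2 * S m)%nat by lia.
        rewrite fam_even, fam_odd. assert (Hm : (m < 2 ^ n)%nat) by (simpl in Hk; lia).
        apply interp_spec; auto; try (apply IHg; lia); try (apply IHp; lia).
Qed.

Lemma fam_chain {X} (T : topology X) (HT : hausdorff T) (HLC : locally_compact T) p0 p1 :
  good T p0 -> good T p1 -> plt p0 p1 -> forall n i j, (i < j <= 2 ^ n)%nat ->
  plt (fam T p0 p1 n i) (fam T p0 p1 n j).
Proof.
  intros H0 H1 H01 n i j Hij. destruct (fam_inv T HT HLC p0 p1 H0 H1 H01 n) as [Hg Hp].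
  induction j as [|j IH]; [lia|].
  destruct (Nat.eq_dec i j) as [->|Hne].
  - apply Hp; lia.
  - assert (IH' := IH ltac:(lia)). intros x Hx.
    apply (Hp j ltac:(lia)). destruct (Hg j ltac:(lia)) as [_ [_ Hs]]. apply Hs, IH'; auto.
Qed.

Lemma fam_lift {X} (T : topology X) p0 p1 m n k : fam T p0 p1 (m + n) (k * 2 ^ m) = fam T p0 p1 n k.
Proof.
  induction m as [|m IH].
  - simpl. f_equal. lia.
  - replace (S m + n)%nat with (S (m + n)) by lia.
    replace (k * 2 ^ S m)%nat with (2 * (k * 2 ^ m))%nat by (simpl; lia).
    rewrite fam_even; auto.
Qed.

Lemma dy_lt_nat n k n' k' : INR k / 2 ^ n < INR k' / 2 ^ n' -> (k * 2 ^ n' < k' * 2 ^ n)%nat.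
Proof.
  intros H. apply INR_lt. rewrite !mult_INR, !pow_INR. replace (INR 2) with 2 by (simpl; ring).
  assert (0 < 2 ^ n) by (apply pow_lt; lra). assert (0 < 2 ^ n') by (apply pow_lt; lra).
  unfold Rdiv in H. apply (Rmult_lt_compat_r (2 ^ n * 2 ^ n')) in H; [|nra].
  replace (INR k * / 2 ^ n * (2 ^ n * 2 ^ n')) with (INR k * 2 ^ n') in H by (field; lra).
  replace (INR k' * / 2 ^ n' * (2 ^ n * 2 ^ n')) with (INR k' * 2 ^ n) in H by (field; lra).
  lra.
Qed.

Lemma dy_le_nat n k n' k' : INR k / 2 ^ n <= INR k' / 2 ^ n' -> (k * 2 ^ n' <= k' * 2 ^ n)%nat.
Proof.
  intros H. destruct (Nat.le_gt_cases (k * 2 ^ n') (k' * 2 ^ n)) as [|Hc]; auto.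
  exfalso. apply lt_INR in Hc. rewrite !mult_INR, !pow_INR in Hc. replace (INR 2) with 2 in Hc by (simpl; ring).
  assert (0 < 2 ^ n) by (apply pow_lt; lra). assert (0 < 2 ^ n') by (apply pow_lt; lra).
  unfold Rdiv in H. apply (Rmult_le_compat_r (2 ^ n * 2 ^ n')) in H; [|nra].
  replace (INR k * / 2 ^ n * (2 ^ n * 2 ^ n')) with (INR k * 2 ^ n') in H by (field; lra).
  replace (INR k' * / 2 ^ n' * (2 ^ n * 2 ^ n')) with (INR k' * 2 ^ n) in H by (field; lra).
  lra.
Qed.

Lemma fam_cmp_lt {X} (T : topology X) (HT : hausdorff T) (HLC : locally_compact T) p0 p1 :
  good T p0 -> good T p1 -> plt p0 p1 -> forall n k n' k', (k <= 2 ^ n)%nat -> (k' <= 2 ^ n')%nat ->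
  INR k / 2 ^ n < INR k' / 2 ^ n' -> plt (fam T p0 p1 n k) (fam T p0 p1 n' k').
Proof.
  intros H0 H1 H01 n k n' k' Hk Hk' Hlt. apply dy_lt_nat in Hlt.
  rewrite <- (fam_lift T p0 p1 n' n k), <- (fam_lift T p0 p1 n n' k').
  rewrite (Nat.add_comm n n'). apply fam_chain; auto. split; auto.
  rewrite Nat.pow_add_r. apply Nat.mul_le_mono_r. auto.
Qed.

Lemma fam_cmp_le {X} (T : topology X) (HT : hausdorff T) (HLC : locally_compact T) p0 p1 :
  good T p0 -> good T p1 -> plt p0 p1 -> forall n k n' k', (k <= 2 ^ n)%nat -> (k' <= 2 ^ n')%nat ->
  INR k / 2 ^ n <= INR k' / 2 ^ n' -> subset (fst (fam T p0 p1 n k)) (snd (fam T p0 p1 n' k')).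
Proof.
  intros H0 H1 H01 n k n' k' Hk Hk' Hle. apply dy_le_nat in Hle.
  rewrite <- (fam_lift T p0 p1 n' n k), <- (fam_lift T p0 p1 n n' k').
  rewrite (Nat.add_comm n n').
  destruct (fam_inv T HT HLC p0 p1 H0 H1 H01 (n' + n)) as [Hg Hp].
  assert (Hj : (k' * 2 ^ n <= 2 ^ (n' + n))%nat).
  { rewrite Nat.pow_add_r. apply Nat.mul_le_mono_r. auto. }
  destruct (Nat.eq_dec (k * 2 ^ n') (k' * 2 ^ n)) as [E|E].
  - rewrite E. apply Hg; auto.
  - intros x Hx. destruct (Hg (k' * 2 ^ n)%nat Hj) as [_ [_ Hs]]. apply Hs.
    apply (fam_chain T HT HLC p0 p1 H0 H1 H01 (n' + n) (k * 2 ^ n') (k' * 2 ^ n)); [lia|].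
    destruct (Hg (k * 2 ^ n')%nat ltac:(lia)) as [_ [_ Hs']]. apply Hs'; auto.
Qed.



Lemma INR_le_pow2 N : INR N <= 2 ^ N.
Proof.
  induction N as [|N IH]; [simpl; lra|]. rewrite S_INR; simpl pow.
  assert (1 <= 2 ^ N) by (apply pow_R1_Rle; lra). lra.
Qed.

Lemma dyadic_dense lo hi : 0 <= lo -> lo < hi -> hi <= 1 ->
  exists n k, (k <= 2 ^ n)%nat /\ lo < INR k / 2 ^ n /\ INR k / 2 ^ n < hi.
Proof.
  intros H0 H1 H2.
  destruct (archimed_cor1 (hi - lo) ltac:(lra)) as [N [HN HN0]].
  assert (HNp : 0 < INR N) by (apply lt_0_INR; auto).
  assert (HP : INR N <= 2 ^ N) by apply INR_le_pow2.
  assert (HP0 : 0 < 2 ^ N) by (apply pow_lt; lra).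
  assert (Hi : / 2 ^ N <= / INR N) by (apply Rinv_le_contravar; lra).
  destruct (archimed (lo * 2 ^ N)) as [Hu1 Hu2].
  set (z := up (lo * 2 ^ N)) in *.
  assert (Hz : (0 <= z)%Z). { apply le_IZR. nra. }
  exists N, (Z.to_nat z).
  assert (Hk : INR (Z.to_nat z) = IZR z) by (rewrite INR_IZR_INZ, Z2Nat.id; auto).
  assert (Hlt : INR (Z.to_nat z) / 2 ^ N < hi).
  { rewrite Hk. apply (Rmult_lt_reg_r (2 ^ N)); auto. unfold Rdiv.
    rewrite Rmult_assoc, Rinv_l, Rmult_1_r by lra.
    assert (hi - lo > / 2 ^ N) by lra.
    apply (Rmult_lt_compat_r (2 ^ N)) in H; auto. rewrite Rinv_l in H by lra. nra. }
  split; [|split; auto].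
  - apply INR_le. rewrite pow_INR. replace (INR 2) with 2 by (simpl; ring).
    apply (Rmult_lt_compat_r (2 ^ N)) in Hlt; auto. unfold Rdiv in Hlt.
    rewrite Rmult_assoc, Rinv_l, Rmult_1_r in Hlt by lra. nra.
  - rewrite Hk. apply (Rmult_lt_reg_r (2 ^ N)); auto. unfold Rdiv.
    rewrite Rmult_assoc, Rinv_l, Rmult_1_r by lra. lra.
Qed.

Lemma dy_nonneg n k : 0 <= INR k / 2 ^ n.
Proof. unfold Rdiv. apply Rmult_le_pos. apply pos_INR. left; apply Rinv_0_lt_compat, pow_lt; lra. Qed.

Lemma dy_le1 n k : (k <= 2 ^ n)%nat -> INR k / 2 ^ n <= 1.
Proof.
  intros Hk. apply le_INR in Hk. rewrite pow_INR in Hk. replace (INR 2) with 2 in Hk by (simpl; ring).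
  assert (0 < 2 ^ n) by (apply pow_lt; lra).
  apply (Rmult_le_reg_r (2 ^ n)); auto. unfold Rdiv. rewrite Rmult_assoc, Rinv_l by lra. lra.
Qed.

Definition Eset {X} (T : topology X) p0 p1 (x : X) (r : R) : Prop :=
  r = 0 \/ exists n k, (k <= 2 ^ n)%nat /\ fst (fam T p0 p1 n k) x /\ r = 1 - INR k / 2 ^ n.

Lemma Eset_bound {X} (T : topology X) p0 p1 x : bound (Eset T p0 p1 x).
Proof. exists 1. intros r [->|[n [k [_ [_ ->]]]]]; [lra|]. pose proof (dy_nonneg n k); lra. Qed.

Lemma Eset_ne {X} (T : topology X) p0 p1 x : exists r, Eset T p0 p1 x r.
Proof. exists 0; left; auto. Qed.

Definition ury {X} (T : topology X) p0 p1 (x : X) : R :=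
  proj1_sig (completeness (Eset T p0 p1 x) (Eset_bound T p0 p1 x) (Eset_ne T p0 p1 x)).

Lemma ury_lub {X} (T : topology X) p0 p1 x : is_lub (Eset T p0 p1 x) (ury T p0 p1 x).
Proof. unfold ury. destruct completeness; auto. Qed.

Lemma ury_ge0 {X} (T : topology X) p0 p1 x : 0 <= ury T p0 p1 x.
Proof. destruct (ury_lub T p0 p1 x) as [H _]. apply H; left; auto. Qed.

Lemma ury_le1 {X} (T : topology X) p0 p1 x : ury T p0 p1 x <= 1.
Proof. destruct (ury_lub T p0 p1 x) as [_ H]. apply H.
  intros r [->|[n [k [_ [_ ->]]]]]; [lra|]. pose proof (dy_nonneg n k); lra. Qed.

Lemma ury_F1 {X} (T : topology X) p0 p1 x n k : (k <= 2 ^ n)%nat -> fst (fam T p0 p1 n k) x ->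
  1 - INR k / 2 ^ n <= ury T p0 p1 x.
Proof. intros Hk Hx. destruct (ury_lub T p0 p1 x) as [H _]. apply H; right; eauto. Qed.

Lemma ury_F2 {X} (T : topology X) p0 p1 x c : 0 <= c -> c < ury T p0 p1 x ->
  exists n k, (k <= 2 ^ n)%nat /\ fst (fam T p0 p1 n k) x /\ c < 1 - INR k / 2 ^ n.
Proof.
  intros Hc Hu. apply NNPP; intros Hn.
  destruct (ury_lub T p0 p1 x) as [_ H].
  assert (ury T p0 p1 x <= c); [|lra]. apply H.
  intros r [->|[n [k [Hk [Hx ->]]]]]; auto.
  apply Rnot_lt_le; intros Hlt. apply Hn; eauto.
Qed.

Lemma ury_F3 {X} (T : topology X) (HT : hausdorff T) (HLC : locally_compact T) p0 p1 :
  good T p0 -> good T p1 -> plt p0 p1 -> forall x n k, (k <= 2 ^ n)%nat -> ~ snd (fam T p0 p1 n k) x ->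
  ury T p0 p1 x <= Rmax 0 (1 - INR k / 2 ^ n).
Proof.
  intros H0 H1 H01 x n k Hk Hx. destruct (ury_lub T p0 p1 x) as [_ H]. apply H.
  intros r [->|[n' [k' [Hk' [Hx' ->]]]]]; [apply Rmax_l|].
  destruct (Rle_lt_dec (INR k' / 2 ^ n') (INR k / 2 ^ n)) as [Hle|Hlt].
  - exfalso. apply Hx. apply (fam_cmp_le T HT HLC p0 p1 H0 H1 H01 n' k' n k); auto.
  - eapply Rle_trans; [|apply Rmax_r]. lra.
Qed.

Lemma ury_open_gt {X} (T : topology X) (HT : hausdorff T) (HLC : locally_compact T) p0 p1 :
  good T p0 -> good T p1 -> plt p0 p1 -> forall c, is_open T (fun x => c < ury T p0 p1 x).
Proof.
  intros H0 H1 H01 c. destruct (Rlt_dec c 0) as [Hc|Hc].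
  - apply (open_ext T (fun _ => True)); [|apply open_full].
    intros x; split; auto. intros _. pose proof (ury_ge0 T p0 p1 x); lra.
  - apply open_local. intros x Hx.
    destruct (ury_F2 T p0 p1 x c ltac:(lra) Hx) as [n [k [Hk [Hxk Hck]]]].
    exists (fst (fam T p0 p1 n k)). split; [|split; auto].
    + destruct (fam_inv T HT HLC p0 p1 H0 H1 H01 n) as [Hg _]. apply Hg; auto.
    + intros y Hy. pose proof (ury_F1 T p0 p1 y n k Hk Hy). lra.
Qed.

Lemma ury_open_lt {X} (T : topology X) (HT : hausdorff T) (HLC : locally_compact T) p0 p1 :
  good T p0 -> good T p1 -> plt p0 p1 -> forall c, is_open T (fun x => ury T p0 p1 x < c).
Proof.
  intros H0 H1 H01 c. destruct (Rlt_dec 1 c) as [Hc|Hc].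
  - apply (open_ext T (fun _ => True)); [|apply open_full].
    intros x; split; auto. intros _. pose proof (ury_le1 T p0 p1 x); lra.
  - apply open_local. intros x Hx. pose proof (ury_ge0 T p0 p1 x).
    destruct (dyadic_dense (1 - c) (1 - ury T p0 p1 x)) as [n' [k' [Hk' [Hl' Hh']]]]; try lra.
    destruct (dyadic_dense (1 - c) (INR k' / 2 ^ n')) as [n [k [Hk [Hl Hh]]]]; try lra.
    assert (Hnx : ~ snd (fam T p0 p1 n k) x).
    { intros Hx'. apply (fam_cmp_lt T HT HLC p0 p1 H0 H1 H01 n k n' k') in Hx'; auto.
      pose proof (ury_F1 T p0 p1 x n' k' Hk' Hx'). lra. }
    exists (fun y => ~ snd (fam T p0 p1 n k) y). split; [|split; auto].
    + apply compact_closed; auto. destruct (fam_inv T HT HLC p0 p1 H0 H1 H01 n) as [Hg _].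
      apply Hg; auto.
    + intros y Hy. pose proof (ury_F3 T HT HLC p0 p1 H0 H1 H01 y n k Hk Hy).
      unfold Rmax in *; destruct Rle_dec; lra.
Qed.

Lemma urysohn {X} (T : topology X) (HT : hausdorff T) (HLC : locally_compact T) (K U : X -> Prop) :
  compact T K -> is_open T U -> subset K U ->
  exists u : X -> R, rcont T u /\ (forall x, 0 <= u x <= 1) /\ (forall x, K x -> u x = 1) /\
    exists L, compact T L /\ subset L U /\ forall x, u x <> 0 -> L x.
Proof.
  intros HK HU HKU.
  destruct (shrink T HT HLC K U HK HU HKU) as [V1 [L1 [HV1 [HL1 [HKV1 [HVL1 HLU1]]]]]].
  destruct (shrink T HT HLC K V1 HK HV1 HKV1) as [V0 [L0 [HV0 [HL0 [HKV0 [HVL0 HLU0]]]]]].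
  set (p0 := (V0, L0)). set (p1 := (V1, L1)).
  assert (H0 : good T p0) by (unfold good; simpl; auto).
  assert (H1 : good T p1) by (unfold good; simpl; auto).
  assert (H01 : plt p0 p1) by (unfold plt; simpl; auto).
  exists (ury T p0 p1). split; [|split; [|split]].
  - apply rcont_opens; [apply ury_open_gt|apply ury_open_lt]; auto.
  - intros x; split; [apply ury_ge0|apply ury_le1].
  - intros x Hx. apply Rle_antisym; [apply ury_le1|].
    pose proof (ury_F1 T p0 p1 x 0 0 ltac:(simpl; lia) (HKV0 x Hx)). simpl in H.
    replace (0 / 1) with 0 in H by field. lra.
  - exists L1; split; [|split]; auto.
    intros x Hx. pose proof (ury_ge0 T p0 p1 x).
    destruct (ury_F2 T p0 p1 x 0 ltac:(lra) ltac:(lra)) as [n [k [Hk [Hxk _]]]].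
    apply (fam_cmp_le T HT HLC p0 p1 H0 H1 H01 n k 0 1 Hk ltac:(simpl; lia)) in Hxk.
    + exact Hxk.
    + simpl. replace (1 / 1) with 1 by field. apply dy_le1; auto.
Qed.



Lemma act_inv_l {X G} (T : topology X) (Gr : group G) alpha :
  action_by_homeos T Gr alpha -> forall g x, alpha (ginv Gr g) (alpha g x) = x.
Proof. intros [H1 [H2 H3]] g x. rewrite <- H2, gmulVg, H1; auto. Qed.

Lemma act_inv_r {X G} (T : topology X) (Gr : group G) alpha :
  action_by_homeos T Gr alpha -> forall g x, alpha g (alpha (ginv Gr g) x) = x.
Proof. intros [H1 [H2 H3]] g x. rewrite <- H2, gmulgV, H1; auto. Qed.

Lemma act_cont {X G} (T : topology X) (Gr : group G) alpha :
  action_by_homeos T Gr alpha -> forall g, continuous T (alpha g).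
Proof. intros [H1 [H2 H3]] g. destruct (H3 g); auto. Qed.

Definition Q (z : C) := fst z * fst z + snd z * snd z.

Lemma Q_ge0 z : 0 <= Q z.
Proof. unfold Q; nra. Qed.

Lemma Cabs_ge0 z : 0 <= Cabs z.
Proof. apply sqrt_pos. Qed.

Lemma Cabs_sq z : Cabs z * Cabs z = Q z.
Proof. unfold Cabs. apply sqrt_sqrt. apply Q_ge0. Qed.

Lemma Cabs_fst z : Rabs (fst z) <= Cabs z.
Proof.
  unfold Cabs. rewrite <- sqrt_Rsqr_abs. apply sqrt_le_1_alt. unfold Rsqr. nra.
Qed.

Lemma Cabs_real r : Cabs (r, 0) = Rabs r.
Proof. unfold Cabs; simpl. rewrite <- sqrt_Rsqr_abs. f_equal. unfold Rsqr; ring. Qed.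

Lemma Cabs_zero z : fst z = 0 -> snd z = 0 -> Cabs z = 0.
Proof. intros H1 H2. unfold Cabs. rewrite H1, H2. rewrite Rmult_0_l, Rplus_0_l. apply sqrt_0. Qed.

Lemma Q_lt {z} d e : Cabs z <= d -> d < e -> Q z < e * e.
Proof. intros H1 H2. rewrite <- Cabs_sq. pose proof (Cabs_ge0 z). nra. Qed.

Lemma real_in_C0 {X} (T : topology X) (f : X -> R) :
  rcont T f -> (exists L, compact T L /\ forall x, f x <> 0 -> L x) -> in_C0 T (fun x => (f x, 0)).
Proof.
  intros Hf [L [HL HfL]]. split.
  - intros x eps He. destruct (Hf x eps He) as [W [HW [Hx H]]]. exists W; repeat split; auto.
    intros y Hy. unfold Csub; simpl. rewrite Rminus_0_r, Cabs_real. auto.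
  - intros eps He. exists L; split; auto. intros x Hx.
    destruct (Req_dec (f x) 0) as [E|E]; [|exfalso; auto]. rewrite E, Cabs_real, Rabs_R0; auto.
Qed.

Lemma rcont_fst {X} (T : topology X) (f : X -> C) : continuous_C T f -> rcont T (fun x => fst (f x)).
Proof.
  intros Hf x eps He. destruct (Hf x eps He) as [W [HW [Hx H]]]. exists W; repeat split; auto.
  intros y Hy. eapply Rle_lt_trans; [apply (Cabs_fst (Csub (f y) (f x)))|auto].
Qed.

Lemma rcont_map {X} (T : topology X) (f : X -> R) m : rcont T f -> continuous T m -> rcont T (fun x => f (m x)).
Proof.
  intros Hf Hm x eps He. destruct (Hf (m x) eps He) as [W [HW [Hx H]]].
  exists (fun y => W (m y)); split; [apply Hm; auto|split; auto].
Qed.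

Lemma rcont_open_gt {X} (T : topology X) f c : rcont T f -> is_open T (fun x => c < f x).
Proof.
  intros Hf. apply open_local. intros x Hx. destruct (Hf x (f x - c)) as [W [HW [Hxw H]]]; [lra|].
  exists W; repeat split; auto. intros y Hy. specialize (H y Hy).
  unfold Rabs in H; destruct Rcase_abs in H; lra.
Qed.

Lemma rcont_open_lt {X} (T : topology X) f c : rcont T f -> is_open T (fun x => f x < c).
Proof.
  intros Hf. apply open_local. intros x Hx. destruct (Hf x (c - f x)) as [W [HW [Hxw H]]]; [lra|].
  exists W; repeat split; auto. intros y Hy. specialize (H y Hy).
  unfold Rabs in H; destruct Rcase_abs in H; lra.
Qed.

Lemma compact_ext {X} (T : topology X) (K K' : X -> Prop) :
  (forall x, K x <-> K' x) -> compact T K -> compact T K'.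
Proof.
  intros H HK. replace K' with K; auto.
  apply functional_extensionality; intro x; apply propositional_extensionality; auto.
Qed.

Lemma pos_real {X} (T : topology X) a x : positive_C0 T a -> a x = (fst (a x), 0).
Proof. intros [_ H]. destruct (H x) as [H1 _]. destruct (a x); simpl in *; subst; auto. Qed.

Lemma level_compact {X} (T : topology X) (HT : hausdorff T) a d : positive_C0 T a -> 0 < d ->
  compact T (fun x => d <= fst (a x)).
Proof.
  intros Ha Hd. destruct Ha as [[Hc Hv] Hp]. destruct (Hv d Hd) as [Ka [HKa HKv]].
  apply (compact_ext T (fun x => Ka x /\ ~ (fun y => fst (a y) < d) x)).
  - intros x; split.
    + intros [H1 H2]. lra.
    + intros H. split.
      * apply NNPP; intros Hn. specialize (HKv x Hn). pose proof (Cabs_fst (a x)).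
        destruct (Hp x) as [_ Hp2]. rewrite Rabs_pos_eq in H0 by auto. lra.
      * lra.
  - apply compact_inter_closed; auto. apply rcont_open_lt. apply rcont_fst; auto.
Qed.

Lemma side {X G} (T : topology X) (HT : hausdorff T) (Gr : group G) alpha (Halpha : action_by_homeos T Gr alpha)
  (a : X -> C) (Ha : positive_C0 T a) d (Hd : 0 < d) g
  (Hg : forall x, d <= fst (a x) -> d / 2 < fst (a (alpha g x))) :
  exists dd : X -> C, in_C0 T dd /\
    (forall x, Cabs (Csub (Cmul (Cmul (Cconj (dd x)) (a x)) (dd x)) (sigma Gr alpha g a x)) <= d) /\
    (forall x, fst (a (alpha (ginv Gr g) x)) < d -> dd x = (0, 0)).
Proof.
  set (ra := fun x => fst (a x)).
  set (sa := fun x => ra (alpha (ginv Gr g) x)).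
  set (h := fun x => Rmax (sa x - d) 0).
  set (m := fun x => / Rmax (ra x) (d / 2)).
  set (e := fun x => sqrt (h x * m x)).
  assert (Hpos : forall x, 0 <= ra x) by (intros x; destruct Ha as [_ Hp]; apply Hp).
  assert (Hh0 : forall x, 0 <= h x) by (intros x; unfold h; apply Rmax_r).
  assert (Hm0 : forall x, 0 < m x).
  { intros x; unfold m. apply Rinv_0_lt_compat. eapply Rlt_le_trans; [|apply Rmax_r]. lra. }
  assert (He0 : forall x, sa x < d -> e x = 0).
  { intros x Hx. unfold e, h. rewrite Rmax_right by lra. rewrite Rmult_0_l. apply sqrt_0. }
  assert (Hra : rcont T ra) by (apply rcont_fst; destruct Ha as [[Hc _] _]; auto).
  assert (Hsa : rcont T sa) by exact (rcont_map T ra (alpha (ginv Gr g)) Hra (act_cont T Gr alpha Halpha _)).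
  exists (fun x => (e x, 0)). split; [|split].
  - apply real_in_C0.
    + unfold e. apply (rcont_comp T (fun x => h x * m x) sqrt).
      * apply rcont_mul.
        -- unfold h. apply rcont_max. exact (rcont_add T _ _ Hsa (rcont_const T (- d))).
        -- unfold m. apply (rcont_comp T ra (fun t => / Rmax t (d / 2))); auto.
           intros; apply cont_invmax; lra.
      * intros x. apply continuity_pt_sqrt. specialize (Hh0 x); specialize (Hm0 x); nra.
    + exists (fun x => (fun y => d <= fst (a y)) (alpha (ginv Gr g) x)). split.
      * exact (compact_preimage T (alpha g) (alpha (ginv Gr g)) (fun y => d <= fst (a y))
          (act_cont T Gr alpha Halpha g) (act_inv_l T Gr alpha Halpha g) (act_inv_r T Gr alpha Halpha g)
          (level_compact T HT a d Ha Hd)).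
      * intros x Hx. apply NNPP; intros Hn. apply Hx. apply He0. unfold sa, ra. lra.
  - intros x. unfold sigma. rewrite (pos_real T a x Ha), (pos_real T a (alpha (ginv Gr g) x) Ha).
    replace (Csub (Cmul (Cmul (Cconj (e x, 0)) (fst (a x), 0)) (e x, 0)) (fst (a (alpha (ginv Gr g) x)), 0))
      with (e x * e x * ra x - sa x, 0) by (unfold Csub, Cmul, Cconj, sa, ra; simpl; f_equal; ring).
    rewrite Cabs_real.
    assert (Hsa0 : 0 <= sa x) by (unfold sa; apply Hpos).
    destruct (Rlt_dec (sa x) d) as [Hlt|Hge].
    + rewrite He0 by auto. rewrite Rmult_0_l, Rmult_0_l, Rabs_left1 by lra. lra.
    + assert (Hee : e x * e x = h x * m x).
      { unfold e. apply sqrt_sqrt. specialize (Hh0 x); specialize (Hm0 x); nra. }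
      assert (Hrx : d / 2 < ra x).
      { unfold ra. rewrite <- (act_inv_r T Gr alpha Halpha g x). apply Hg. unfold sa, ra in Hge. lra. }
      rewrite Hee. unfold m, h. rewrite Rmax_left by lra. rewrite Rmax_left by lra.
      rewrite Rmult_assoc, Rinv_l by lra. rewrite Rmult_1_r.
      replace (sa x - d - sa x) with (- d) by ring. rewrite Rabs_Ropp, Rabs_pos_eq; lra.
  - intros x Hx. rewrite He0; auto.
Qed.

Lemma dir2 {X G} (T : topology X) (HT : hausdorff T) (Gr : group G) alpha
  (Halpha : action_by_homeos T Gr alpha) :
  compact_separating T Gr alpha -> G_separating T Gr alpha.
Proof.
  intros Hcs a b c Ha Hb Hc eps He.
  set (dl := eps / 2). assert (Hdl : 0 < dl) by (unfold dl; lra).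
  destruct (Hcs (fun x => dl / 2 < fst (a x)) (fun x => dl / 2 < fst (b x))
              (fun x => dl <= fst (a x)) (fun x => dl <= fst (b x))) as [g1 [g2 [Hg1 [Hg2 Hdis]]]].
  - apply rcont_open_gt, rcont_fst. destruct Ha as [[H _] _]; auto.
  - apply rcont_open_gt, rcont_fst. destruct Hb as [[H _] _]; auto.
  - apply level_compact; auto.
  - apply level_compact; auto.
  - intros x Hx; simpl in *; lra.
  - intros x Hx; simpl in *; lra.
  - destruct (side T HT Gr alpha Halpha a Ha dl Hdl g1 Hg1) as [d1 [Hd1 [N1 Z1]]].
    destruct (side T HT Gr alpha Halpha b Hb dl Hdl g2 Hg2) as [d2 [Hd2 [N2 Z2]]].
    exists d1, d2. split; auto. split; auto. exists g1, g2. split; [|split].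
    + exists dl; split; [unfold dl; lra|]. intros x; apply N1.
    + exists dl; split; [unfold dl; lra|]. intros x; apply N2.
    + exists 0; split; [lra|]. intros x.
      destruct (Rlt_dec (fst (a (alpha (ginv Gr g1) x))) dl) as [h1|h1].
      { rewrite (Z1 x h1). apply Req_le, Cabs_zero; unfold Cmul, Cconj; simpl; ring. }
      destruct (Rlt_dec (fst (b (alpha (ginv Gr g2) x))) dl) as [h2|h2].
      { rewrite (Z2 x h2). apply Req_le, Cabs_zero; unfold Cmul, Cconj; simpl; ring. }
      exfalso. apply (Hdis (alpha (ginv Gr g1) x) (alpha (ginv Gr g2) x)); [lra|lra|].
      rewrite !(act_inv_r T Gr alpha Halpha); auto.
Qed.

Lemma claim {X G} (T : topology X) (Gr : group G) alpha (Halpha : action_by_homeos T Gr alpha)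
  (u : X -> R) (d : X -> C) g dl (K : X -> Prop) :
  (forall x, K x -> u x = 1) -> dl < 1/4 ->
  (forall x, Cabs (Csub (Cmul (Cmul (Cconj (d x)) (u x * u x, 0)) (d x))
                       (sigma Gr alpha g (fun z => (u z * u z, 0)) x)) <= dl) ->
  forall x, K x -> 3/4 < u (alpha g x) * u (alpha g x) * Q (d (alpha g x)).
Proof.
  intros Hu1 Hdl N x Hx. specialize (N (alpha g x)). unfold sigma in N.
  rewrite (act_inv_l T Gr alpha Halpha) in N. rewrite (Hu1 x Hx) in N.
  pose proof (Cabs_fst (Csub (Cmul (Cmul (Cconj (d (alpha g x))) (u (alpha g x) * u (alpha g x), 0)) (d (alpha g x))) (1 * 1, 0))) as H.
  assert (E : fst (Csub (Cmul (Cmul (Cconj (d (alpha g x))) (u (alpha g x) * u (alpha g x), 0)) (d (alpha g x))) (1 * 1, 0))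
     = u (alpha g x) * u (alpha g x) * Q (d (alpha g x)) - 1).
  { unfold Csub, Cmul, Cconj, Q. simpl. ring. }
  rewrite E in H. unfold Rabs in H; destruct Rcase_abs in H; lra.
Qed.

Lemma dir1 {X G} (T : topology X) (HT : hausdorff T) (HLC : locally_compact T) (Gr : group G) alpha
  (Halpha : action_by_homeos T Gr alpha) :
  G_separating T Gr alpha -> compact_separating T Gr alpha.
Proof.
  intros Hgs U1 U2 K1 K2 HU1 HU2 HK1 HK2 HKU1 HKU2.
  destruct (urysohn T HT HLC K1 U1 HK1 HU1 HKU1) as [u [Hu [Hu01 [Hu1 [L1 [HL1 [HLU1 HuL1]]]]]]].
  destruct (urysohn T HT HLC K2 U2 HK2 HU2 HKU2) as [v [Hv [Hv01 [Hv1 [L2 [HL2 [HLU2 HvL2]]]]]]].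
  assert (Ha : positive_C0 T (fun x => (u x * u x, 0))).
  { split; [apply real_in_C0; [apply rcont_mul; auto|]|].
    - exists L1; split; auto. intros x Hx; apply HuL1; intros E; apply Hx; rewrite E; ring.
    - intros x; simpl; split; auto. nra. }
  assert (Hb : positive_C0 T (fun x => (v x * v x, 0))).
  { split; [apply real_in_C0; [apply rcont_mul; auto|]|].
    - exists L2; split; auto. intros x Hx; apply HvL2; intros E; apply Hx; rewrite E; ring.
    - intros x; simpl; split; auto. nra. }
  assert (Hc : in_C0 T (fun x => (u x * v x, 0))).
  { apply real_in_C0; [apply rcont_mul; auto|].
    exists L1; split; auto. intros x Hx; apply HuL1; intros E; apply Hx; rewrite E; ring. }
  destruct (Hgs _ _ _ Ha Hb Hc (1/4) ltac:(lra)) as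
    [d1 [d2 [_ [_ [g1 [g2 [[e1 [He1 N1]] [[e2 [He2 N2]] [e3 [He3 N3]]]]]]]]]].
  assert (C1 := claim T Gr alpha Halpha u d1 g1 e1 K1 Hu1 He1 N1).
  assert (C2 := claim T Gr alpha Halpha v d2 g2 e2 K2 Hv1 He2 N2).
  exists g1, g2. split; [|split].
  - intros x Hx. apply HLU1, HuL1. intros E. specialize (C1 x Hx). rewrite E in C1.
    pose proof (Q_ge0 (d1 (alpha g1 x))). nra.
  - intros x Hx. apply HLU2, HvL2. intros E. specialize (C2 x Hx). rewrite E in C2.
    pose proof (Q_ge0 (d2 (alpha g2 x))). nra.
  - intros x1 x2 Hx1 Hx2 Heq. specialize (C1 x1 Hx1). specialize (C2 x2 Hx2).
    rewrite <- Heq in C2. set (y := alpha g1 x1) in *.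
    specialize (N3 y). simpl in N3.
    assert (HQ := Q_lt e3 (1/4) N3 He3).
    assert (E : Q (Cmul (Cmul (Cconj (d1 y)) (u y * v y, 0)) (d2 y)) =
                (u y * u y * Q (d1 y)) * (v y * v y * Q (d2 y))).
    { unfold Q, Cmul, Cconj. simpl. ring. }
    rewrite E in HQ. nra.
Qed.

Theorem mainTheorem8 (X : Type) (T : topology X)
    (HT2 : hausdorff T) (HLC : locally_compact T)
    (G : Type) (Gr : group G) (alpha : G -> X -> X)
    (Halpha : action_by_homeos T Gr alpha) :
  G_separating T Gr alpha <-> compact_separating T Gr alpha.
Proof.
  split; [apply dir1; auto | apply dir2; auto].
Qed.
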